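(* Let $n\in(-1,1)$ and let $\mathcal{S}\in\mathscr{W}$ be $C^4$-smooth with astigmatism $s$. Suppose (3) $s^{(i)}\sim c_i\sin^{m-i}\theta$ as $\theta\to0$ and as $\theta\to\pi$, for some $m>n+3$ and $i=0,1,2$, with constants $c_i$ possibly different at $\theta=0$ and $\theta=\pi$. Then both (1) $\mathscr{L}^n_n\left(\frac{s}{\sin^{n+2}\theta}\right)\in L^2_{\sin\theta}(0,\pi)$, and (2) $n\cdot\lim_{\theta\to0}\frac{s}{\sin^2\theta}=n\cdot\lim_{\theta\to\pi}\frac{s}{\sin^2\theta}=0$ hold.
   Context: $\mathscr{W}$ is the set of embedded $C^2$-smooth topological 2-spheres in $\mathbb{R}^3$ that are rotationally symmetric and strictly convex, parametrised by the inverse Gauss map with $\theta\in[0,\pi]$ the angle between the outward normal and the symmetry axis; with support function $r=\vec X\cdot\hat n$, $r_1=\frac{\cos^2\theta}{\sin\theta}\frac{d}{d\theta}(r/\cos\theta)$, $r_2=r''+r$, and astigmatism $s=r_2-r_1$; $s^{(i)}$ is the $i$-th derivative in $\theta$. $\mathscr{L}^n_n=\frac{d^2}{d\theta^2}+\cot\theta\frac{d}{d\theta}+n(n+1)-\frac{n^2}{\sin^2\theta}$. $L^2_{\sin\theta}(0,\pi)$: complex-valued functions square integrable w.r.t. $\sin\theta\,d\theta$. *)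

(* Defs.v *)
From HB Require Import structures.
From mathcomp Require Import all_boot all_order all_algebra.
From mathcomp Require Import all_classical all_reals all_analysis.
Set Implicit Arguments. Unset Strict Implicit. Unset Printing Implicit Defensive.
Import Order.TTheory GRing.Theory Num.Theory.
Import numFieldNormedType.Exports.
Local Open Scope classical_set_scope.
Local Open Scope ring_scope.

Section Defs.
Variable R : realType.
Implicit Types (r f : R -> R) (t : R).

(* Radii of curvature from the support function r(theta):
   r1 = cos^2/sin * d/dtheta (r / cos) = r' cot + r   (expanded form)
   r2 = r'' + r *)
Definition rad1 r t : R := derive1 r t * (cos t / sin t) + r t.
Definition rad2 r t : R := derive1n 2 r t + r t.

Definition astig r t : R := rad2 r t - rad1 r t.

(* S in W, C^4-smooth, described by its support function r along a meridian
   (theta in R, the restriction of the support function on S^2 to a great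
   circle through the poles): r is C^4, even, 2pi-periodic, and the surface
   is strictly convex (both principal radii of curvature positive on [0,pi],
   at the poles r1 = r2 so the condition is on r2). *)
Definition W4 r : Prop :=
  (forall k : nat, (k < 4)%N -> forall x : R, derivable (derive1n k r) x 1) /\
      continuous (derive1n 4 r) /\
      (forall t, r (- t) = r t) /\
      (forall t, r (t + 2 * pi) = r t) /\
      (forall t, 0 < t < pi -> 0 < rad1 r t /\ 0 < rad2 r t) /\
    (0 < rad2 r 0 /\ 0 < rad2 r pi).

Definition Lnn (n : R) f t : R :=
  derive1n 2 f t + (cos t / sin t) * derive1 f t
  + (n * (n + 1) - n ^+ 2 / sin t ^+ 2) * f t.

Definition L2sin f : Prop :=
  (@lebesgue_measure R).-integrable `]0, pi[
     (fun t => ((f t) ^+ 2 * sin t)%:E).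

End Defs.

(* Main.v *)
Require Import Defs.
From HB Require Import structures.
From mathcomp Require Import all_boot all_order all_algebra.
From mathcomp Require Import all_classical all_reals all_analysis.
From mathcomp Require Import measurable_realfun.
From mathcomp Require Import ring lra.
Import Order.TTheory GRing.Theory Num.Theory.
Import numFieldNormedType.Exports.
Local Open Scope classical_set_scope.
Local Open Scope ring_scope.
Section Pw.
Context {R : realType}.
Local Notation mu := (@lebesgue_measure R).
Implicit Types x e : R.

Lemma is_derive_powsin e x : 0 < sin x ->
  is_derive x 1 (fun y => sin y `^ e) (e * sin x `^ (e - 1) * cos x).
Proof.
move=> sx.
have h1 : is_derive (sin x) 1 (fun y : R => y `^ e) (e * sin x `^ (e - 1)) by exact: is_derive1_powR.
exact: (is_derive1_comp h1 (is_derive_sin x)).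
Qed.

Lemma derivable_cont (f : R -> R) x : derivable f x 1 -> {for x, continuous f}.
Proof. by move=> /derivable1_diffP/differentiable_continuous. Qed.

Lemma isd_cont (f : R -> R) x d : is_derive x 1 f d -> {for x, continuous f}.
Proof. move=> h; apply: derivable_cont; exact: ex_derive. Qed.
Arguments isd_cont {f x d}.

Lemma isdD (f g : R -> R) x a b : is_derive x 1 f a -> is_derive x 1 g b ->
  is_derive x 1 (fun y => f y + g y) (a + b).
Proof. move=> h1 h2; exact: is_deriveD. Qed.
Lemma isdB (f g : R -> R) x a b : is_derive x 1 f a -> is_derive x 1 g b ->
  is_derive x 1 (fun y => f y - g y) (a - b).
Proof. move=> h1 h2; exact: is_deriveB. Qed.
Lemma isdM (f g : R -> R) x a b : is_derive x 1 f a -> is_derive x 1 g b ->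
  is_derive x 1 (fun y => f y * g y) (a * g x + f x * b).
Proof.
move=> h1 h2; have H := is_deriveM h1 h2.
have -> : a * g x + f x * b = f x *: b + g x *: a by rewrite addrC [a * _]mulrC.
exact: H.
Qed.
Lemma isdN (f : R -> R) x a : is_derive x 1 f a -> is_derive x 1 (fun y => - f y) (- a).
Proof. move=> h1; exact: is_deriveN. Qed.
Arguments isdD {f g x a b}. Arguments isdB {f g x a b}. Arguments isdM {f g x a b}.
Arguments isdN {f x a}.
Lemma isdC x (k : R) : is_derive x 1 (fun _ : R => k) 0.
Proof. exact: is_derive_cst. Qed.
Lemma isdId x : is_derive x 1 (fun y : R => y) 1.
Proof. exact: is_derive_id. Qed.
Lemma isdV (f : R -> R) x a : f x != 0 -> is_derive x 1 f a ->
  is_derive x 1 (fun y => (f y)^-1) (- (f x) ^- 2 * a).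
Proof. move=> h1 h2; exact: is_deriveV. Qed.

Arguments isdV {f x a}.
Lemma cont_powsin e x : 0 < sin x -> {for x, continuous (fun y => sin y `^ e)}.
Proof. move=> sx; apply: derivable_cont; apply: ex_derive; exact: is_derive_powsin. Qed.

Lemma powsin_le1 e t : 0 <= e -> sin t `^ e <= 1.
Proof.
move=> e0; have [s0|s0] := leP 0 (sin t).
  apply: (@le_trans _ _ (1 `^ e)); last by rewrite powR1.
  by apply: ge0_ler_powR => //; rewrite ?nnegrE // sin_le1.
by rewrite lt0_powR1.
Qed.
Lemma improper_le (f F : R -> R) (a b M : R) : a < b ->
  (forall x, a < x < b -> 0 <= f x) ->
  (forall x, a < x < b -> {for x, continuous f}) ->
  (forall x, a < x < b -> is_derive x 1 F (f x)) ->
  (forall x, a < x < b -> `|F x| <= M) ->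
  (\int[mu]_(x in `]a, b[) (f x)%:E <= (M *+ 2)%:E)%E.
Proof.
move=> ab f0 cf dF FM.
pose e (k : nat) := (b - a) / k.+3%:R.
have k3 k : 0 < k.+3%:R :> R by rewrite ltr0n.
have e_gt0 k : 0 < e k by rewrite divr_gt0 // subr_gt0.
have e_lt k : e k * 2 < b - a.
  by rewrite /e mulrAC ltr_pdivrMr // ltr_pM2l ?subr_gt0 // ltr_nat.
pose I k := [set` `[a + e k, b - e k]] : set R.
have Isub k : I k `<=` [set` `]a, b[].
  move=> x; rewrite /I /= !in_itv /= => /andP[h1 h2]; apply/andP; split.
    have := e_gt0 k; lra.
  have := e_gt0 k; lra.
have nd : {homo I : n m / (n <= m)%N >-> (n <= m)%O}.
  move=> n m nm; rewrite subsetEset => x; rewrite /I/= !in_itv/= => /andP[h1 h2].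
  have : e m <= e n.
    rewrite /e ler_pdivrMr // mulrAC ler_pdivlMr // ler_pM2l ?subr_gt0 //.
    by rewrite ler_nat !ltnS.
  move=> h; apply/andP; split; lra.
have cupI : \bigcup_k I k = [set` `]a, b[].
  apply/seteqP; split.
    by move=> x [k _]; exact: Isub.
  move=> x; rewrite /= in_itv/= => /andP[ax xb].
  pose d := Num.min (x - a) (b - x).
  have d0 : 0 < d by rewrite lt_min !subr_gt0 ax xb.
  pose k := Num.trunc ((b - a) / d).
  exists k => //.
  have hk : (b - a) / d < k.+3%:R.
    apply: (lt_trans (truncnS_gt _)); by rewrite ltr_nat.
  have : e k <= d.
    rewrite /e ler_pdivrMr // mulrC -ler_pdivrMr //.
    exact: ltW.
  rewrite /I/= in_itv/=.
  move=> h; have h1 : d <= x - a by rewrite /d ge_min lexx.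
  have h2 : d <= b - x by rewrite /d ge_min lexx orbT.
  apply/andP; split; lra.
have oU : open [set` `]a, b[] by exact: interval_open.
have mfU : measurable_fun [set` `]a, b[] f.
  apply: measurable_realfun.open_continuous_measurable_fun => // x.
  move=> /set_mem; rewrite /= in_itv /= => hx; have := cf x hx; exact.
have mI k : measurable (I k) by rewrite /I; exact: measurable_itv.
have mf k : measurable_fun (I k) (fun x : R => (f x)%:E).
  apply/measurable_EFinP; exact: measurable_funS mfU.
have f0' k x : I k x -> (0 <= (fun x : R => (f x)%:E) x)%E.
  move=> /Isub; rewrite /= in_itv /= => h; rewrite lee_fin; exact: f0.
have h := ge0_nondecreasing_set_cvg_integral (mu := mu) nd mI mf f0'.
rewrite cupI in h.
rewrite -(cvg_lim _ h) //.
apply: lime_le; first by apply/cvg_ex; eexists; exact: h.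
apply: nearW => k /=.
have ab' : a + e k < b - e k by have := e_lt k; lra.
have inab x : a + e k <= x <= b - e k -> a < x < b.
  move=> /andP[h1 h2]; have := e_gt0 k => ?; apply/andP; split; lra.
rewrite (@continuous_FTC2 _ f F) //.
- rewrite -EFinB lee_fin.
  have i1 : a < b - e k < b by apply: inab; apply/andP; split; lra.
  have i2 : a < a + e k < b by apply: inab; apply/andP; split; lra.
  have := FM _ i1; have := FM _ i2; rewrite !ler_norml.
  move=> /andP[? ?] /andP[? ?]; rewrite mulr2n; lra.
- apply: continuous_in_subspaceT => x; rewrite inE /= in_itv /= => hx.
  by apply: cf; apply: inab.
- split.
  + move=> x; rewrite in_itv /= => /andP[h1 h2]; apply: ex_derive; apply: dF.
    by apply: inab; apply/andP; split; lra.
  + apply: cvg_at_right_filter; apply: derivable_cont; apply: ex_derive; apply: dF.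
    by apply: inab; apply/andP; split; lra.
  + apply: cvg_at_left_filter; apply: derivable_cont; apply: ex_derive; apply: dF.
    by apply: inab; apply/andP; split; lra.
- move=> x; rewrite in_itv /= => /andP[h1 h2].
  rewrite derive1E; apply: derive_val; apply: dF.
  by apply: inab; apply/andP; split; lra.
Qed.

Lemma contD (f g : R -> R) x : {for x, continuous f} -> {for x, continuous g} ->
  {for x, continuous (fun y => f y + g y)}.
Proof. move=> h1 h2; exact: cvgD. Qed.
Lemma contB (f g : R -> R) x : {for x, continuous f} -> {for x, continuous g} ->
  {for x, continuous (fun y => f y - g y)}.
Proof. move=> h1 h2; exact: cvgB. Qed.
Lemma contM (f g : R -> R) x : {for x, continuous f} -> {for x, continuous g} ->
  {for x, continuous (fun y => f y * g y)}.
Proof. move=> h1 h2; exact: cvgM. Qed.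
Lemma contN (f : R -> R) x : {for x, continuous f} ->
  {for x, continuous (fun y => - f y)}.
Proof. move=> h1; exact: cvgN. Qed.
Lemma contC x (k : R) : {for x, continuous (fun _ : R => k)}.
Proof. exact: cvg_cst. Qed.
Lemma contId x : {for x, continuous (fun y : R => y)}.
Proof. exact: cvg_id. Qed.
Lemma contV (f : R -> R) x : f x != 0 -> {for x, continuous f} ->
  {for x, continuous (fun y => (f y)^-1)}.
Proof. move=> h1 h2; exact: cvgV. Qed.
Lemma contsin x : {for x, continuous (@sin R)}.
Proof. exact: continuous_sin. Qed.
Lemma contcos x : {for x, continuous (@cos R)}.
Proof. exact: continuous_cos. Qed.

Lemma powS t x : 0 < sin t -> sin t `^ (x + 1) = sin t `^ x * sin t.
Proof.
move=> st; rewrite powRD; last by rewrite (gt_eqF st) implybT.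
by rewrite powRr1 // ltW.
Qed.

Lemma integrable_sinpow c : 0 < c ->
  mu.-integrable [set` `]0, pi[] (fun t => (sin t `^ (c - 1))%:E).
Proof.
move=> c0.
pose dom t := sin t `^ (c-1) + (c+1)/c * (1 - sin t `^ (c+1)).
pose F t := (sin t `^ c * cos t + (c+1) * t) * c^-1.
have sU (t : R) : 0 < t < pi -> 0 < sin t by exact: sin_gt0_pi.
have cn0 : c != 0 by rewrite gt_eqF.
have e1 t : 0 < sin t -> sin t `^ c = sin t `^ (c - 1) * sin t.
  by move=> st; rewrite -powS // subrK.
have e2 t : 0 < sin t -> sin t `^ (c + 1) = sin t `^ (c - 1) * sin t ^+ 2.
  by move=> st; rewrite powS // e1 // expr2 mulrA.
have ddom t : 0 < t < pi -> is_derive t 1 F (dom t).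
  move=> tU; have st := sU t tU.
  have d1 := is_derive_powsin c t st.
  have d2 := isdM d1 (is_derive_cos t).
  have d3 := isdM (isdC t (c+1)) (isdId t).
  have d5 := isdM (isdD d2 d3) (isdC t c^-1).
  apply: (is_derive_eq d5); rewrite /=.
  rewrite /dom e2 // e1 //.
  set X := sin t `^ (c - 1).
  apply/eqP; rewrite -subr_eq0; apply/eqP.
  transitivity (X * (cos t ^+ 2 + sin t ^+ 2 - 1)); first by field.
  by rewrite cos2Dsin2 subrr mulr0.
have FM t : 0 < t < pi -> `|F t| <= (1 + (c+1) * pi) * c^-1.
  move=> tU; have ci : 0 < c^-1 by rewrite invr_gt0.
  rewrite /F normrM (gtr0_norm ci) ler_pM2r //.
  have p1 := powsin_le1 c t (ltW c0).
  have p0 : 0 <= sin t `^ c := powR_ge0 _ _.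
  have := cos_geN1 t; have := cos_le1 t.
  move: tU => /andP[t0 tpi] ? ?.
  rewrite ler_norml; apply/andP; split; nra.
have dom_cont t : 0 < t < pi -> {for t, continuous dom}.
  move=> tU; have st := sU t tU; rewrite /dom.
  apply: contD; first exact: cont_powsin.
  apply: contM; first exact: contC.
  apply: contB; first exact: contC.
  exact: cont_powsin.
have dom_ge t : 0 < t < pi -> sin t `^ (c - 1) <= dom t.
  move=> tU; rewrite /dom lerDl; apply: mulr_ge0.
    by rewrite divr_ge0 // ltW // ?addr_gt0.
  by rewrite subr_ge0 powsin_le1 // addr_ge0 // ltW.
have dom0 t : 0 < t < pi -> 0 <= dom t.
  by move=> tU; apply: le_trans (dom_ge t tU); exact: powR_ge0.
have oU : open ([set` `]0, pi[] : set R) by apply: interval_open.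
have idom : mu.-integrable [set` `]0, pi[] (fun t => (dom t)%:E).
  apply/integrableP; split.
    apply/measurable_EFinP; apply: measurable_realfun.open_continuous_measurable_fun => //.
    move=> x /set_mem; rewrite /= in_itv /= => hx; have := dom_cont x hx; exact.
  have -> : (\int[mu]_(x in ([set` `]0%R, pi%R[] : set R)) `|(dom x)%:E|)%E =
      (\int[mu]_(x in ([set` `]0%R, pi%R[] : set R)) (dom x)%:E)%E.
    apply: eq_integral => x /set_mem; rewrite /= in_itv /= => hx.
    rewrite /= ger0_norm // dom0 //.
  have H := @improper_le dom F 0 pi ((1 + (c+1) * pi) / c) (pi_gt0 R) dom0 dom_cont ddom FM.
  apply: le_lt_trans H _.
  exact: ltry.
apply: le_integrable idom => //.
  apply/measurable_EFinP; apply: measurable_realfun.open_continuous_measurable_fun => //.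
  move=> x /set_mem; rewrite /= in_itv /= => hx.
  have := cont_powsin (c - 1) x (sU x hx); exact.
move=> x; rewrite /= in_itv /= => hx.
rewrite /= lee_fin !ger0_norm //; first exact: dom_ge.
- exact: dom0.
- exact: powR_ge0.
Qed.

Lemma contX (f : R -> R) x k : {for x, continuous f} ->
  {for x, continuous (fun y => f y ^+ k)}.
Proof.
move=> h; elim: k => [|k IH].
  have -> : (fun y => f y ^+ 0) = (fun _ => 1) by apply/funext => y; rewrite expr0.
  exact: contC.
have -> : (fun y => f y ^+ k.+1) = (fun y => f y * f y ^+ k).
  by apply/funext => y; rewrite exprS.
exact: contM.
Qed.

Lemma cont_near (g h : R -> R) t : (\forall y \near t, g y = h y) ->
  {for t, continuous h} -> {for t, continuous g}.
Proof.
move=> e ch.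
have et : g t = h t by exact: (nbhs_singleton e).
rewrite /prop_for /continuous_at et.
have e' : \forall y \near t, h y = g y by apply: filterS e => y ->.
exact: (cvg_trans (near_eq_cvg e') ch).
Qed.

Arguments cont_near {g h t}.
Lemma nearU (t : R) : 0 < t < pi -> \forall y \near t, 0 < y < pi.
Proof.
move=> h; have := @near_in_itvoo R 0 pi t; rewrite in_itv /= => /(_ h).
by apply: filterS => y; rewrite in_itv.
Qed.

Definition cot (y : R) := cos y / sin y.
Definition q2 (y : R) := - (sin y * sin y)^-1.
Definition dq2 (y : R) := - (- (sin y * sin y) ^- 2 * (cos y * sin y + sin y * cos y)).

Lemma is_derive_cot y : 0 < sin y -> is_derive y 1 cot (q2 y).
Proof.
move=> sy; have sn : sin y != 0 by rewrite gt_eqF.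
have H := isdM (is_derive_cos y) (isdV sn (is_derive_sin y)).
apply: (is_derive_eq H); rewrite /q2.
apply/eqP; rewrite -subr_eq0; apply/eqP.
transitivity (- (cos y ^+ 2 + sin y ^+ 2 - 1) / (sin y ^+ 2)); first by field.
by rewrite cos2Dsin2 subrr oppr0 mul0r.
Qed.

Lemma is_derive_q2 y : 0 < sin y -> is_derive y 1 q2 (dq2 y).
Proof.
move=> sy; have sn : sin y * sin y != 0 by rewrite mulf_neq0 // gt_eqF.
have H := isdN (@isdV (fun z => sin z * sin z) y _ sn (isdM (is_derive_sin y) (is_derive_sin y))).
rewrite /q2 /dq2; exact: H.
Qed.

Lemma cont_cot y : 0 < sin y -> {for y, continuous cot}.
Proof.
move=> sy; apply: contM; first exact: contcos.
by apply: contV; [rewrite gt_eqF | exact: contsin].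
Qed.

Lemma cont_q2 y : 0 < sin y -> {for y, continuous q2}.
Proof.
move=> sy; apply: contN; apply: contV; first by rewrite mulf_neq0 // gt_eqF.
by apply: contM; exact: contsin.
Qed.

Lemma cont_dq2 y : 0 < sin y -> {for y, continuous dq2}.
Proof.
move=> sy; have sn : sin y * sin y != 0 by rewrite mulf_neq0 // gt_eqF.
apply: contN; apply: contM.
  apply: contN; apply: contV; first by rewrite expf_neq0.
  by apply: contX; apply: contM; exact: contsin.
by apply: contD; apply: contM; (exact: contsin || exact: contcos).
Qed.

Section Rcalc.
Variable r : R -> R.
Hypothesis hd : forall k : nat, (k < 4)%N -> forall x : R, derivable (derive1n k r) x 1.
Hypothesis hc4 : continuous (derive1n 4 r).

Lemma dr k (y : R) : (k < 4)%N -> is_derive y 1 (derive1n k r) (derive1n k.+1 r y).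
Proof.
move=> hk; have := derivableP (hd k hk y).
by rewrite /= derive1E.
Qed.

Lemma cr k (y : R) : (k <= 4)%N -> {for y, continuous (derive1n k r)}.
Proof.
rewrite leq_eqVlt => /orP[/eqP -> | hk]; first exact: hc4.
exact: derivable_cont (hd k hk y).
Qed.

Definition D0 (y : R) := derive1n 3 r y - (derive1n 2 r y * cot y + derive1n 1 r y * q2 y).
Definition D1 (y : R) := derive1n 4 r y - ((derive1n 3 r y * cot y + derive1n 2 r y * q2 y)
   + (derive1n 2 r y * q2 y + derive1n 1 r y * dq2 y)).

Lemma astigE : astig r = fun y => derive1n 2 r y - derive1n 1 r y * cot y.
Proof. apply/funext => y /=; rewrite /astig /rad2 /rad1 /cot /=; ring. Qed.

Lemma is_derive_s0 (y : R) : 0 < sin y -> is_derive y 1 (astig r) (D0 y).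
Proof.
move=> sy; rewrite astigE.
have H := isdB (dr 2 y isT) (isdM (dr 1 y isT) (is_derive_cot y sy)).
rewrite /D0; exact: H.
Qed.

Lemma is_derive_D0 (y : R) : 0 < sin y -> is_derive y 1 D0 (D1 y).
Proof.
move=> sy.
have H := isdB (dr 3 y isT) (isdD (isdM (dr 2 y isT) (is_derive_cot y sy))
                                 (isdM (dr 1 y isT) (is_derive_q2 y sy))).
rewrite /D0 /D1; exact: H.
Qed.

Lemma cont_D1 (y : R) : 0 < sin y -> {for y, continuous D1}.
Proof.
move=> sy; apply: contB; first exact: cr.
apply: contD; apply: contD; apply: contM; (exact: cr || exact: cont_cot || exact: cont_q2 || exact: cont_dq2).
Qed.

Let s0 := astig r.
Let s1 := derive1n 1 (astig r).
Let s2 := derive1n 2 (astig r).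

Lemma s1E (y : R) : 0 < y < pi -> s1 y = D0 y.
Proof.
move=> yU; rewrite /s1 /= derive1E; apply: derive_val.
exact: is_derive_s0 y (sin_gt0_pi yU).
Qed.

Lemma s2E (y : R) : 0 < y < pi -> s2 y = D1 y.
Proof.
move=> yU; rewrite /s2 /= derive1E; apply: derive_val.
apply: (near_eq_is_derive _ (is_derive_D0 y (sin_gt0_pi yU))).
near=> z; apply/esym; apply: s1E; near: z; exact: nearU.
Unshelve. all: by end_near. Qed.

Lemma calcA (t : R) : 0 < t < pi ->
  [/\ is_derive t 1 s0 (s1 t), is_derive t 1 s1 (s2 t) & {for t, continuous s2}].
Proof.
move=> tU; have st := sin_gt0_pi tU; split.
- by rewrite s1E //; exact: is_derive_s0.
- rewrite s2E //; apply: (near_eq_is_derive _ (is_derive_D0 t st)).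
  near=> z; apply/esym; apply: s1E; near: z; exact: nearU.
- apply: (cont_near _ (cont_D1 t st)).
  near=> z; apply: s2E; near: z; exact: nearU.
Unshelve. all: by end_near. Qed.
End Rcalc.

Section Fcalc.
Variables (s0 s1 s2 : R -> R) (a n : R).
Hypothesis hA : forall t : R, 0 < t < pi ->
  [/\ is_derive t 1 s0 (s1 t), is_derive t 1 s1 (s2 t) & {for t, continuous s2}].

Definition P (y : R) := sin y `^ (-a).
Definition P1 (y : R) := -a * sin y `^ (-a - 1) * cos y.
Definition P2 (y : R) := (0 * sin y `^ (-a - 1) + -a * ((-a - 1) * sin y `^ (-a - 1 - 1) * cos y)) * cos y
   + (-a * sin y `^ (-a - 1)) * - sin y.
Definition ff (y : R) := s0 y / sin y `^ a.
Definition F1 (y : R) := s1 y * P y + s0 y * P1 y.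
Definition F2 (y : R) := (s2 y * P y + s1 y * P1 y) + (s1 y * P1 y + s0 y * P2 y).

Lemma ffE : ff = fun y => s0 y * P y.
Proof. by apply/funext => y; rewrite /ff /P powRN. Qed.

Lemma dP (y : R) : 0 < sin y -> is_derive y 1 P (P1 y).
Proof. move=> sy; exact: is_derive_powsin. Qed.

Lemma dP1 (y : R) : 0 < sin y -> is_derive y 1 P1 (P2 y).
Proof.
move=> sy.
have H := isdM (isdM (isdC y (-a)) (is_derive_powsin (-a - 1) y sy)) (is_derive_cos y).
rewrite /P1 /P2; exact: H.
Qed.

Arguments dP {y}. Arguments dP1 {y}.
Lemma cP (y : R) : 0 < sin y -> {for y, continuous P}.
Proof. move=> sy; exact: cont_powsin. Qed.
Lemma cP1 (y : R) : 0 < sin y -> {for y, continuous P1}.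
Proof. move=> sy; apply: derivable_cont; apply: ex_derive; exact: dP1. Qed.
Lemma cP2 (y : R) : 0 < sin y -> {for y, continuous P2}.
Proof.
move=> sy; rewrite /P2.
apply: contD; apply: contM; try exact: contcos.
- apply: contD; apply: contM; try exact: contC; try exact: cont_powsin.
  apply: contM; last exact: contcos.
  apply: contM; [exact: contC | exact: cont_powsin].
- apply: contM; [exact: contC | exact: cont_powsin].
- apply: contN; exact: contsin.
Qed.

Arguments cP {y}. Arguments cP1 {y}. Arguments cP2 {y}.
Lemma dff (y : R) : 0 < y < pi -> is_derive y 1 ff (F1 y).
Proof.
move=> yU; have [h0 _ _] := hA y yU.
have H := isdM h0 (dP (sin_gt0_pi yU)).
rewrite ffE /F1; exact: H.
Qed.

Arguments dff {y}.
Lemma df1 (y : R) : 0 < y < pi -> derive1 ff y = F1 y.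
Proof. move=> yU; rewrite derive1E; apply: derive_val; exact: dff. Qed.

Arguments df1 {y}.
Lemma dF1 (t : R) : 0 < t < pi -> is_derive t 1 F1 (F2 t).
Proof.
move=> tU; have [h0 h1 _] := hA t tU; have st := sin_gt0_pi tU.
have H := isdD (isdM h1 (dP st)) (isdM h0 (dP1 st)).
rewrite /F1 /F2; exact: H.
Qed.

Arguments dF1 {t}.
Lemma df2 (t : R) : 0 < t < pi -> derive1n 2 ff t = F2 t.
Proof.
move=> tU; rewrite /= derive1E; apply: derive_val.
apply: (near_eq_is_derive _ (dF1 tU)).
near=> z; apply/esym; apply: df1; near: z; exact: nearU.
Unshelve. all: by end_near. Qed.

Definition LE (y : R) := F2 y + cot y * F1 y + (n * (n + 1) - n ^+ 2 / sin y ^+ 2) * (s0 y * P y).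

Lemma LnnE (t : R) : 0 < t < pi -> Lnn n ff t = LE t.
Proof.
move=> tU; rewrite /Lnn /LE df2 // (df1 tU) /cot.
by rewrite ffE.
Qed.

Lemma Lnn_cont (t : R) : 0 < t < pi -> {for t, continuous (Lnn n ff)}.
Proof.
move=> tU; have [h0 h1 h2] := hA t tU; have st := sin_gt0_pi tU.
have c0 := isd_cont h0.
have c1 := isd_cont h1.
apply: (cont_near (h := LE)).
  near=> z; apply: LnnE; near: z; exact: nearU.
rewrite /LE /F1 /F2.
have cs2 : {for t, continuous (fun y => sin y ^+ 2)} by apply: contX; exact: contsin.
apply: contD; first apply: contD.
- apply: contD; apply: contD; apply: contM; (exact: c0 || exact: c1 || exact: h2 || exact: cP st || exact: cP1 st || exact: cP2 st).
- apply: contM; first exact: cont_cot.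
  apply: contD; apply: contM; (exact: c0 || exact: c1 || exact: cP st || exact: cP1 st).
- apply: contM; last by apply: contM; [exact: c0 | exact: cP st].
  apply: contB; first exact: contC.
  apply: contM; first exact: contC.
  apply: contV; last exact: cs2.
  by rewrite expf_neq0 // gt_eqF.
Unshelve. all: by end_near. Qed.
End Fcalc.

Definition Bnd (g : R -> R) := exists M, 0 <= M /\ forall t : R, 0 < t < pi -> `|g t| <= M.

Lemma bndD f g : Bnd f -> Bnd g -> Bnd (fun y => f y + g y).
Proof.
move=> [M1 [M10 h1]] [M2 [M20 h2]]; exists (M1 + M2); split; first exact: addr_ge0.
move=> t tU; apply: le_trans (ler_normD _ _) _; exact: lerD (h1 t tU) (h2 t tU).
Qed.
Lemma bndM f g : Bnd f -> Bnd g -> Bnd (fun y => f y * g y).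
Proof.
move=> [M1 [M10 h1]] [M2 [M20 h2]]; exists (M1 * M2); split; first exact: mulr_ge0.
move=> t tU; rewrite normrM; apply: ler_pM => //; [exact: h1 | exact: h2].
Qed.
Lemma bndN f : Bnd f -> Bnd (fun y => - f y).
Proof. by move=> [M [M0 h]]; exists M; split => // t tU; rewrite normrN; exact: h. Qed.
Lemma bndB f g : Bnd f -> Bnd g -> Bnd (fun y => f y - g y).
Proof. by move=> h1 h2; apply: bndD => //; exact: bndN. Qed.
Lemma bndC (k : R) : Bnd (fun _ => k).
Proof. by exists `|k|; split. Qed.
Lemma bnd_cos : Bnd (@cos R).
Proof. by exists 1; split => // t _; exact: cos_max. Qed.
Lemma bnd_sin : Bnd (@sin R).
Proof. by exists 1; split => // t _; exact: sin_max. Qed.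

Lemma bnd_lim (h : R -> R) (l0 l1 : R) : (forall t : R, 0 < t < pi -> {for t, continuous h}) ->
  h x @[x --> (0:R)^'+] --> l0 -> h x @[x --> (pi:R)^'-] --> l1 -> Bnd h.
Proof.
move=> ch h0 h1.
have [d0 d00 Hq0] : exists2 d, 0 < d & forall t, 0 < t < d -> `|h t| <= `|l0| + 1.
  have [e /= e0 He] := @cvgr_dist_lt _ _ _ _ _ h l0 h0 1 ltr01.
  exists e => // t /andP[t0 te].
  have : `|l0 - h t| < 1.
    by apply: He => //=; rewrite sub0r normrN gtr0_norm.
  have := ler_normB l0 (l0 - h t); rewrite opprB addrC subrK; lra.
have [d1 d10 Hq1] : exists2 d, 0 < d & forall t, pi - d < t < pi -> `|h t| <= `|l1| + 1.
  have [e /= e0 He] := @cvgr_dist_lt _ _ _ _ _ h l1 h1 1 ltr01.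
  exists e => // t /andP[t0 te].
  have : `|l1 - h t| < 1.
    by apply: He => //=; rewrite gtr0_norm ?subr_gt0 //; lra.
  have := ler_normB l1 (l1 - h t); rewrite opprB addrC subrK; lra.
pose d := Num.min (Num.min d0 d1) pi / 2.
have pi0 := pi_gt0 R.
have dd0 : d <= d0 / 2 by rewrite ler_pM2r // !ge_min lexx.
have dd1 : d <= d1 / 2 by rewrite ler_pM2r // !ge_min lexx orbT.
have dpi : d <= pi / 2 by rewrite ler_pM2r // !ge_min lexx orbT.
have dgt0 : 0 < d by rewrite divr_gt0 // !lt_min d00 d10 pi0.
have dle : d <= pi - d by lra.
have cabs : {within `[d, pi - d], continuous (fun t => `|h t|)}.
  apply: continuous_in_subspaceT => x /set_mem; rewrite /= in_itv /= => /andP[x1 x2].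
  apply: cvg_norm; apply: ch; apply/andP; split; lra.
have [c cin Hc] := EVT_max dle cabs.
exists (Num.max (Num.max (`|l0| + 1) (`|l1| + 1)) `|h c|); split.
  by rewrite !le_max normr_ge0 !orbT.
move=> t /andP[t0 tpi].
have [td|td] := ltP t d.
  apply: le_trans (Hq0 t _) _; first by apply/andP; split; lra.
  by rewrite !le_max lexx.
have [tpd|tpd] := ltP (pi - d) t.
  apply: le_trans (Hq1 t _) _; first by apply/andP; split; lra.
  by rewrite !le_max lexx orbT.
apply: le_trans (Hc t _) _; first by rewrite in_itv /= td tpd.
by rewrite !le_max lexx orbT.
Qed.

Lemma powD' (S r s : R) : 0 < S -> S `^ (r + s) = S `^ r * S `^ s.
Proof. by move=> S0; rewrite powRD // (gt_eqF S0) implybT. Qed.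

Section Ident.
Variables (s0 s1 s2 : R -> R) (a n m : R).
Definition Hq0 (t : R) := s0 t / sin t `^ (m - 0%:R).
Definition Hq1 (t : R) := s1 t / sin t `^ (m - 1%:R).
Definition Hq2 (t : R) := s2 t / sin t `^ (m - 2%:R).
Definition Q (t : R) := Hq2 t + 2 * Hq1 t * (-a * cos t)
  + Hq0 t * (a * (a + 1) * (cos t * cos t) + a * (sin t * sin t))
  + cos t * Hq1 t + (-a) * (cos t * cos t) * Hq0 t
  + (n * (n + 1) * (sin t * sin t) - n * n) * Hq0 t.

Lemma LE_eq (t : R) : 0 < sin t -> LE s0 s1 s2 a n t = sin t `^ (m - a - 2) * Q t.
Proof.
move=> St.
have X0 : sin t `^ a != 0 by rewrite gt_eqF // powR_gt0.
have w0 : sin t `^ (m - a - 2) != 0 by rewrite gt_eqF // powR_gt0.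
have S0 : sin t != 0 by rewrite gt_eqF.
set e := m - a - 2.
have ee : m = e + a + 2 by rewrite /e; ring.
have e0 : sin t `^ (m - 0%:R) = sin t `^ e * sin t `^ a * sin t ^+ 2.
  rewrite (_ : m - 0%:R = e + a + 2%:R); last by rewrite mulr0n ee; ring.
  by rewrite (powD' (sin t) (e + a) 2%:R St) (powD' (sin t) e a St) powR_mulrn // ltW.
have e1 : sin t `^ (m - 1%:R) = sin t `^ e * sin t `^ a * sin t.
  rewrite (_ : m - 1%:R = e + a + 1); last by rewrite ee; ring.
  by rewrite (powD' (sin t) (e + a) 1 St) (powD' (sin t) e a St) powRr1 // ltW.
have e2 : sin t `^ (m - 2%:R) = sin t `^ e * sin t `^ a.
  rewrite (_ : m - 2%:R = e + a); last by rewrite ee; ring.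
  by rewrite (powD' (sin t) e a St).
have eP2 : sin t `^ (-a - 1 - 1) = (sin t `^ a * (sin t * sin t))^-1.
  rewrite (_ : -a - 1 - 1 = - (a + 1 + 1)); last by ring.
  by rewrite powRN (powD' (sin t) (a + 1) 1 St) (powD' (sin t) a 1 St) powRr1 ?ltW // mulrA.
have eP1 : sin t `^ (-a - 1) = (sin t `^ a * sin t)^-1.
  rewrite (_ : -a - 1 = - (a + 1)); last by ring.
  by rewrite powRN (powD' (sin t) a 1 St) powRr1 ?ltW.
have eP : sin t `^ (-a) = (sin t `^ a)^-1 by rewrite powRN.
rewrite /LE /F2 /F1 /P /P1 /P2 /Q /Hq0 /Hq1 /Hq2 /cot eP2 eP1 eP e0 e1 e2.
field.
by rewrite X0 w0 S0.
Qed.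

Lemma LE_bound : Bnd Hq0 -> Bnd Hq1 -> Bnd Hq2 ->
  exists K, 0 <= K /\ forall t : R, 0 < t < pi ->
    `|LE s0 s1 s2 a n t| <= K * sin t `^ (m - a - 2).
Proof.
move=> b0 b1 b2.
have [K [K0 hK]] : Bnd Q.
  rewrite /Q.
  apply: bndD; last by apply: bndM; [apply: bndB; apply: bndM; [apply: bndM; [exact: bndC| apply: bndC]| exact: bndM bnd_sin bnd_sin| apply: bndC| apply: bndC]| exact: b0].
  apply: bndD; last by apply: bndM; [apply: bndM; [exact: bndC| exact: bndM bnd_cos bnd_cos]| exact: b0].
  apply: bndD; last by apply: bndM; [exact: bnd_cos| exact: b1].
  apply: bndD; last first.
    apply: bndM; first exact: b0.
    apply: bndD; apply: bndM.
    - by apply: bndM; apply: bndC.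
    - exact: bndM bnd_cos bnd_cos.
    - exact: bndC.
    - exact: bndM bnd_sin bnd_sin.
  apply: bndD; first exact: b2.
  apply: bndM; first by apply: bndM; [exact: bndC| exact: b1].
  by apply: bndM; [exact: bndC| exact: bnd_cos].
exists K; split => // t tU.
rewrite LE_eq ?sin_gt0_pi // normrM ger0_norm ?powR_ge0 // mulrC.
by rewrite ler_pM2r ?powR_gt0 ?sin_gt0_pi //; exact: hK.
Qed.
End Ident.

Lemma powsin_cvg0 (F : set_system R) (FF : Filter F) (e : R) : 0 < e ->
  (\forall t \near F, 0 < sin t) -> sin t @[t --> F] --> 0 ->
  sin t `^ e @[t --> F] --> 0.
Proof.
move=> e0 spos s0.
have sF : sin t @[t --> F] --> (0:R)^'+.
  move=> A hA.
  have hs : F [set t | 0 < sin t -> A (sin t)] := s0 _ hA.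
  move: hs spos; apply: filterS2 => t h1 h2; exact: h1 h2. 
have := cvg_comp (@sin R) (fun a : R => a `^ e) sF (powR_cvg0 e0). exact.
Qed.

Lemma lim_s2 (F : set_system R) (FF : Filter F) (s0 : R -> R) (m l : R) : 2 < m ->
  (\forall t \near F, 0 < sin t) ->
  s0 t / sin t `^ (m - 0%:R) @[t --> F] --> l ->
  sin t @[t --> F] --> 0 ->
  s0 t / sin t ^+ 2 @[t --> F] --> 0.
Proof.
move=> m2 spos hl s0F.
have m20 : 0 < m - 2 by rewrite subr_gt0.
have pw := powsin_cvg0 F FF (m - 2) m20 spos s0F.
have := cvgM hl pw.
rewrite mulr0 => H.
apply: (@cvg_trans _ ((s0 t / sin t `^ (m - 0%:R) * sin t `^ (m - 2)) @[t --> F])); last exact: H.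
apply: near_eq_cvg.
apply: filterS spos => t St /=.
have e : sin t `^ (m - 0%:R) = sin t `^ (m - 2) * sin t ^+ 2.
  rewrite (_ : m - 0%:R = (m - 2) + 2%:R); last by rewrite mulr0n; ring.
  by rewrite (powD' (sin t) (m - 2) 2%:R St) powR_mulrn // ltW.
rewrite e; field.
by rewrite !gt_eqF ?powR_gt0.
Qed.
End Pw.

Theorem proposition5p6 (R : realType) (n : R) (r : R -> R) :
  -1 < n < 1 ->
  W4 r ->
  (exists m : R, n + 3 < m /\
     exists c d : nat -> R,
       forall i : nat, (i <= 2)%N ->
         ((fun t => derive1n i (astig r) t / (sin t `^ (m - i%:R)))
            @ 0^'+ --> c i) /\
         ((fun t => derive1n i (astig r) t / (sin t `^ (m - i%:R)))
            @ pi^'- --> d i)) ->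
  L2sin (Lnn n (fun t => astig r t / sin t `^ (n + 2))) /\
  (exists l0 lpi : R,
     ((fun t => astig r t / sin t ^+ 2) @ 0^'+ --> l0) /\
     ((fun t => astig r t / sin t ^+ 2) @ pi^'- --> lpi) /\
     n * l0 = 0 /\ n * lpi = 0).
Proof.
move=> /andP[n1 n2] [hd [hc4 _]] [m [hm [c [d hcd]]]].
have hA := calcA r hd hc4.
have pi0 := pi_gt0 R.
have cH0 : Bnd (Hq0 (astig r) m).
  apply: (@bnd_lim _ _ (c 0%N) (d 0%N)).
  - move=> t tU; have [h0 _ _] := hA t tU; have st := sin_gt0_pi tU.
    rewrite /Hq0; apply: contM; first exact: isd_cont h0.
    apply: contV; first by rewrite gt_eqF // powR_gt0.
    exact: cont_powsin.
  - exact: (hcd 0%N isT).1.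
  - exact: (hcd 0%N isT).2.
have cH1 : Bnd (Hq1 (derive1n 1 (astig r)) m).
  apply: (@bnd_lim _ _ (c 1%N) (d 1%N)).
  - move=> t tU; have [_ h1 _] := hA t tU; have st := sin_gt0_pi tU.
    rewrite /Hq1; apply: contM; first exact: isd_cont h1.
    apply: contV; first by rewrite gt_eqF // powR_gt0.
    exact: cont_powsin.
  - exact: (hcd 1%N isT).1.
  - exact: (hcd 1%N isT).2.
have cH2 : Bnd (Hq2 (derive1n 2 (astig r)) m).
  apply: (@bnd_lim _ _ (c 2%N) (d 2%N)).
  - move=> t tU; have [_ _ h2] := hA t tU; have st := sin_gt0_pi tU.
    rewrite /Hq2; apply: contM; first exact: h2.
    apply: contV; first by rewrite gt_eqF // powR_gt0.
    exact: cont_powsin.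
  - exact: (hcd 2%N isT).1.
  - exact: (hcd 2%N isT).2.
have [K [K0 hK]] := LE_bound _ _ _ (n + 2) n m cH0 cH1 cH2.
have hL t : 0 < t < pi -> Lnn n (fun t => astig r t / sin t `^ (n + 2)) t
    = LE (astig r) (derive1n 1 (astig r)) (derive1n 2 (astig r)) (n + 2) n t.
  move=> tU; exact: (LnnE _ _ _ (n + 2) n hA t tU).
split.
- rewrite /L2sin.
  pose e := m - (n + 2) - 2.
  have c0 : 0 < 2 * e + 2 by rewrite /e; lra.
  apply: (le_integrable _ _ _ (integrableZl _ (K ^+ 2) (integrable_sinpow _ c0))).
    exact: measurable_itv.
    apply/measurable_EFinP; apply: measurable_realfun.open_continuous_measurable_fun.
      by apply: interval_open.
    move=> x /set_mem; rewrite /= in_itv /= => hx.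
    have hc : {for x, continuous (fun y : R =>
        Lnn n (fun t => astig r t / sin t `^ (n + 2)) y ^+ 2 * sin y)}.
      apply: contM; last exact: contsin.
      apply: contX; exact: (Lnn_cont _ _ _ (n + 2) n hA x hx).
    exact: hc.
  move=> x; rewrite /= in_itv /= => hx.
  rewrite lee_fin (hL x hx).
  have St := sin_gt0_pi hx.
  have hb := hK x hx.
  rewrite (_ : 2 * e + 2 - 1 = e + e + 1); last by ring.
  rewrite (powD' _ (e + e) 1 St) (powD' _ e e St) (powRr1 (ltW St)).
  rewrite [X in X <= _]ger0_norm; last by rewrite mulr_ge0 ?sqr_ge0 // ltW.
  rewrite [X in _ <= X]ger0_norm; last by rewrite !mulr_ge0 ?sqr_ge0 ?powR_ge0 // ltW.
  set L := LE _ _ _ _ _ x.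
  have hb2 : `|L| * `|L| <= (K * sin x `^ e) * (K * sin x `^ e).
    by apply: ler_pM => //; exact: hb.
  have eL : L ^+ 2 = `|L| * `|L| by rewrite -expr2 real_normK // num_real.
  rewrite eL.
  have -> : K ^+ 2 * (sin x `^ e * sin x `^ e * sin x) =
    K * sin x `^ e * (K * sin x `^ e) * sin x by ring.
  by rewrite ler_pM2r.
  exact: measurable_itv.
- exists 0, 0.
  have m2 : 2 < m by lra.
  split; [|split; [|by rewrite !mulr0]].
  + apply: (lim_s2 _ _ (astig r) m (c 0%N)) => //.
    * near=> t; apply: sin_gt0_pi; apply/andP; split; near: t.
        exact: nbhs_right_gt.
      exact: nbhs_right_lt.
    * exact: (hcd 0%N isT).1.
    * have h : sin x @[x --> (0:R)] --> sin 0 := @continuous_sin R 0.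
      rewrite sin0 in h; exact: cvg_at_right_filter h.
  + apply: (lim_s2 _ _ (astig r) m (d 0%N)) => //.
    * near=> t; apply: sin_gt0_pi; apply/andP; split; near: t.
        exact: nbhs_left_gt.
      exact: nbhs_left_lt.
    * exact: (hcd 0%N isT).2.
    * have h : sin x @[x --> (pi:R)] --> sin pi := @continuous_sin R pi.
      rewrite sinpi in h; exact: cvg_at_left_filter h.
Unshelve. all: by end_near.
Qed.
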